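(* Let $M\in\mathrm{rep}\,G_{m,n}$ be interval-decomposable and $I\in\mathbb{I}_{m,n}$. Then for each $\ast\in\{ss,cc,tot\}$, $$\bar d^\ast_M(I)=\sum_{J\in U(I)} d_M(V_J).$$
   Context: Fix a field $K$. For integers $m,n\ge1$, $G_{m,n}$ is the equioriented commutative $m\times n$ grid: the quiver with vertex set $\{(i,j):1\le i\le m,\ 1\le j\le n\}$ and arrows $(i,j)\to(i,j+1)$ and $(i,j)\to(i+1,j)$, bound by all commutativity relations; $\mathrm{rep}\,G_{m,n}$ is its category of finite-dimensional representations over $K$ satisfying the relations. For an indecomposable $L$, $d_M(L)$ is the multiplicity of $L$ in a Krull–Schmidt decomposition of $M$. An interval of $G_{m,n}$ is a nonempty full subquiver $I$ which is connected (as an undirected graph) and convex (whenever $x,y\in I_0$ and there are paths $x\to z$, $z\to y$ in $G_{m,n}$, then $z\in I_0$); $\mathbb{I}_{m,n}$ is the set of intervals ordered by inclusion of vertex sets, and $U(I)=\{J\in\mathbb{I}_{m,n}:I\le J\}$. The interval representation $V_I$ has $K$ at vertices of $I$, $0$ elsewhere, identity maps on arrows inside $I$ and zero maps otherwise; $M$ is interval-decomposable if it is isomorphic to a direct sum of interval representations. Essential vertices: $I^{ss}_0$ is the set of sources and sinks of the quiver $I$; $I^{cc}_0=I_0\cap(\mathrm{pr}_1(I^{ss}_0)\times\mathrm{pr}_2(I^{ss}_0))$ with $\mathrm{pr}_1,\mathrm{pr}_2$ coordinate projections; $I^{tot}_0=I_0$. Let $KG_{m,n}$ be the $K$-linear category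 whose objects are the vertices and whose morphisms are $K$-linear combinations of paths modulo the commutativity relations; representations are $K$-linear functors $KG_{m,n}\to\mathrm{vect}_K$. For $\ast\in\{ss,cc,tot\}$, $\mathcal{C}^\ast_I$ is the full subcategory of $KG_{m,n}$ on $I^\ast_0$, and $M^\ast_I:=M|_{\mathcal{C}^\ast_I}$. The compressed multiplicity $\bar d^\ast_M(I)$ is the multiplicity of the indecomposable $(V_I)^\ast_I$ as a direct summand of $M^\ast_I$. *)

(* Defs.v *)
From HB Require Import structures.
From mathcomp Require Import all_boot all_order all_algebra.
Set Implicit Arguments. Unset Strict Implicit. Unset Printing Implicit Defensive.
Import GRing.Theory.
Local Open Scope ring_scope.

Section Grid.
Variables (K : fieldType) (m n : nat).

(* vertices of G_{m,n}, 0-indexed: (i,j) with i < m, j < n *)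
Definition vtx := ('I_m * 'I_n)%type.

Definition gle (x y : vtx) : bool := ((x.1 <= y.1)%N && (x.2 <= y.2)%N).

Definition garrow (x y : vtx) : bool :=
  ((x.1 == y.1 :> nat) && (x.2.+1 == y.2 :> nat)) ||
  ((x.1.+1 == y.1 :> nat) && (x.2 == y.2 :> nat)).

Definition adjI (I : {set vtx}) : rel vtx :=
  fun x y => [&& x \in I, y \in I & garrow x y || garrow y x].

Definition is_interval (I : {set vtx}) : bool :=
  [&& I != set0,
      [forall x in I, forall y in I, connect (adjI I) x y] &
      [forall x in I, forall y in I, forall z,
          (gle x z && gle z y) ==> (z \in I)]].

Definition is_source (I : {set vtx}) (x : vtx) : bool :=
  (x \in I) && [forall y in I, ~~ garrow y x].
Definition is_sink (I : {set vtx}) (x : vtx) : bool :=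
  (x \in I) && [forall y in I, ~~ garrow x y].
Definition ss_set (I : {set vtx}) : {set vtx} :=
  [set x | is_source I x || is_sink I x].
Definition cc_set (I : {set vtx}) : {set vtx} :=
  [set x in I | (x.1 \in [set y.1 | y in ss_set I]) &&
                (x.2 \in [set y.2 | y in ss_set I])].

Inductive ess := SS | CC | TOT.
Definition ess_set (e : ess) (I : {set vtx}) : {set vtx} :=
  match e with SS => ss_set I | CC => cc_set I | TOT => I end.

(* Data of a representation of (a full subcategory of) K G_{m,n}:
   a space K^(pdim x) at each vertex and a matrix pmap x y for the
   (unique up to scalar) morphism x -> y; row-vector convention
   (v |-> v *m pmap x y). Only the data at vertices of S and for x <= y
   is relevant for a representation on the full subcategory on S. *)
Record prep := PRep {
  pdim : vtx -> nat;
  pmap : forall x y : vtx, 'M[K]_(pdim x, pdim y) }.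

Definition is_rep (S : {set vtx}) (M : prep) : Prop :=
  (forall x, x \in S -> pmap M x x = 1%:M) /\
  (forall x y z, x \in S -> y \in S -> z \in S -> gle x y -> gle y z ->
     pmap M x y *m pmap M y z = pmap M x z).

(* The restriction M|_{C_S} has the same data, read on S only. *)
Definition restrict (S : {set vtx}) (M : prep) : prep := M.

Definition iso (S : {set vtx}) (A B : prep) : Prop :=
  exists (phi : forall x, 'M[K]_(pdim A x, pdim B x))
         (psi : forall x, 'M[K]_(pdim B x, pdim A x)),
    (forall x, x \in S -> phi x *m psi x = 1%:M /\ psi x *m phi x = 1%:M) /\
    (forall x y, x \in S -> y \in S -> gle x y ->
       pmap A x y *m phi y = phi x *m pmap B x y).

(* M is (isomorphic to) the direct sum of the family N, expressed as a
   biproduct: injections/projections, natural, with the biproduct identities *)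
Definition dsum (S : {set vtx}) (M : prep) (Ix : finType) (N : Ix -> prep)
  : Prop :=
  exists (inj : forall t x, 'M[K]_(pdim (N t) x, pdim M x))
         (prj : forall t x, 'M[K]_(pdim M x, pdim (N t) x)),
    (forall x, x \in S -> \sum_t prj t x *m inj t x = 1%:M) /\
    (forall x t, x \in S -> inj t x *m prj t x = 1%:M) /\
    (forall x t s, x \in S -> t != s -> inj t x *m prj s x = 0) /\
    (forall x y t, x \in S -> y \in S -> gle x y ->
       inj t x *m pmap M x y = pmap (N t) x y *m inj t y) /\
    (forall x y t, x \in S -> y \in S -> gle x y ->
       pmap M x y *m prj t y = prj t x *m pmap (N t) x y).

Definition is_zero (S : {set vtx}) (A : prep) : Prop :=
  forall x, x \in S -> pdim A x = 0%N.

Definition indecomposable (S : {set vtx}) (L : prep) : Prop :=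
  is_rep S L /\ ~ is_zero S L /\
  forall A B : prep, is_rep S A -> is_rep S B ->
    dsum S L (fun b : bool => if b then A else B) ->
    is_zero S A \/ is_zero S B.

Definition KS_decomp (S : {set vtx}) (M : prep) (Ix : finType)
  (N : Ix -> prep) : Prop :=
  (forall t, indecomposable S (N t)) /\ dsum S M N.

Definition Vrep (I : {set vtx}) : prep :=
  @PRep (fun x => nat_of_bool (x \in I))
        (fun x y => const_mx (if [&& x \in I, y \in I & gle x y]
                              then 1 else 0)).

Definition interval_decomposable (M : prep) : Prop :=
  exists (Ix : finType) (J : Ix -> {set vtx}),
    (forall t, is_interval (J t)) /\ dsum setT M (fun t => Vrep (J t)).

End Grid.

(* Main.v *)
Require Import Defs.
From HB Require Import structures.
From mathcomp Require Import all_boot all_order all_algebra.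
From Stdlib Require Import ClassicalEpsilon Classical_Prop.
Require Import Defs.
From mathcomp Require Import zify.

Module PA.
Set Implicit Arguments. Unset Strict Implicit. Unset Printing Implicit Defensive.
Import GRing.Theory.
Local Open Scope ring_scope.

Definition cb (P : Prop) : bool :=
  if excluded_middle_informative P then true else false.
Lemma cbP P : reflect P (cb P).
Proof. by rewrite /cb; case: excluded_middle_informative => h; constructor. Qed.

Section Rk.
Variables (K : fieldType) (m n : nat).
Local Notation vtx := (vtx m n).
Local Notation prep := (prep K m n).

Definition homV (S Q : {set vtx}) (M : prep) k
  (V : forall x, 'M[K]_(k, pdim M x)) : Prop :=
  forall x y, x \in S -> y \in S -> gle x y -> x \in Q ->
    V x *m pmap M x y = if y \in Q then V y else 0.
Definition homF (S Q : {set vtx}) (M : prep) k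
  (F : forall x, 'M[K]_(pdim M x, k)) : Prop :=
  forall x y, x \in S -> y \in S -> gle x y -> y \in Q ->
    pmap M x y *m F y = if x \in Q then F x else 0.
Definition dualsys S Q x0 (M : prep) k := exists V F,
  @homV S Q M k V /\ @homF S Q M k F /\ V x0 *m F x0 = 1%:M.
Definition rk S Q x0 (M : prep) : nat :=
  \max_(k < (pdim M x0).+1 | cb (dualsys S Q x0 M k)) k.

Lemma dualsys_le S Q x0 M k : dualsys S Q x0 M k -> (k <= pdim M x0)%N.
Proof. by case=> V [F [_ [_ h]]]; exact: mulmx1_min h. Qed.

Lemma rk_ge S Q x0 M k : dualsys S Q x0 M k -> (k <= rk S Q x0 M)%N.
Proof.
move=> h; have hk : (k < (pdim M x0).+1)%N by rewrite ltnS; exact: dualsys_le h.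
rewrite /rk; apply: (@leq_bigmax_cond _ _ (fun i : 'I_ _ => val i) (Ordinal hk)).
by apply/cbP.
Qed.

Lemma dualsys0 S Q x0 M : dualsys S Q x0 M 0.
Proof.
exists (fun x => 0 : 'M_(0, pdim M x)), (fun x => 0 : 'M_(pdim M x, 0)).
split; first by move=> x y *; rewrite mul0mx; case: ifP.
split; first by move=> x y *; rewrite mulmx0; case: ifP.
by rewrite [LHS]flatmx0 [RHS]flatmx0.
Qed.

Lemma rk_sys S Q x0 M : dualsys S Q x0 M (rk S Q x0 M).
Proof.
have := @eq_bigmax_cond _
   (fun k : 'I_(pdim M x0).+1 => cb (dualsys S Q x0 M k)) (fun k => val k).
case.
  by apply/card_gt0P; exists ord0; rewrite unfold_in; apply/cbP; exact: dualsys0.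
move=> i0 [Pi0 E].
have E' : rk S Q x0 M = val i0.
  by rewrite -E /rk; apply: eq_bigl => i; rewrite unfold_in.
by rewrite E'; move: Pi0; rewrite unfold_in => /cbP.
Qed.

Lemma homV_mull S Q M k j (A : 'M_(j, k)) V :
  @homV S Q M k V -> @homV S Q M j (fun x => A *m V x).
Proof.
by move=> h x y xS yS xy xQ; rewrite -mulmxA h //; case: ifP; rewrite ?mulmx0.
Qed.

Lemma homF_mulr S Q M k j (A : 'M_(k, j)) F :
  @homF S Q M k F -> @homF S Q M j (fun x => F x *m A).
Proof.
by move=> h x y xS yS xy yQ; rewrite mulmxA h //; case: ifP; rewrite ?mul0mx.
Qed.

Lemma dualsys_mono S Q x0 M k j :
  dualsys S Q x0 M k -> (j <= k)%N -> dualsys S Q x0 M j.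
Proof.
case=> V [F [hV [hF h1]]] jk.
exists (fun x => (pid_mx j : 'M_(j, k)) *m V x),
       (fun x => F x *m (pid_mx j : 'M_(k, j))).
split; first exact: homV_mull.
split; first exact: homF_mulr.
rewrite mulmxA -(mulmxA _ (V x0)) h1 mulmx1 mul_pid_mx.
by rewrite minnn (minn_idPr jk) pid_mx_1.
Qed.

Lemma rank_le_rk S Q x0 M k A B :
  @homV S Q M k A -> @homF S Q M k B ->
  (\rank (A x0 *m B x0) <= rk S Q x0 M)%N.
Proof.
move=> hA hB; set G := A x0 *m B x0.
set r := \rank G.
apply: rk_ge.
exists (fun x => ((pid_mx r : 'M_(r, k)) *m invmx (col_ebase G)) *m A x),
       (fun x => B x *m (invmx (row_ebase G) *m (pid_mx r : 'M_(k, r)))).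
split; first exact: homV_mull.
split; first exact: homF_mulr.
have rk_le : (r <= k)%N by exact: rank_leq_row.
have -> : (pid_mx r : 'M_(r, k)) *m invmx (col_ebase G) *m A x0 *m
    (B x0 *m (invmx (row_ebase G) *m pid_mx r)) =
   (pid_mx r : 'M_(r, k)) *m (invmx (col_ebase G) *m (col_ebase G *m
    ((pid_mx r : 'M_k) *m (row_ebase G *m invmx (row_ebase G))))) *m (pid_mx r : 'M_(k, r)).
  have EG : G = col_ebase G *m pid_mx r *m row_ebase G by rewrite mulmx_ebase.
  set L := col_ebase G in EG *; set U := row_ebase G in EG *.
  rewrite !mulmxA -(mulmxA _ (A x0) (B x0)) -/G.
  by rewrite EG !mulmxA.
rewrite mulKmx ?col_ebase_unit // mulmxV ?row_ebase_unit // mulmx1.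
rewrite !mul_pid_mx; apply/matrixP => i j; rewrite !mxE.
have hi := ltn_ord i; rewrite !leq_min.
have hik : (i < k)%N by exact: leq_trans hi rk_le.
by rewrite hi hik /= !andbT.
Qed.

End Rk.

End PA.
Import PA.

Module PB.
Set Implicit Arguments. Unset Strict Implicit. Unset Printing Implicit Defensive.
Import GRing.Theory.
Local Open Scope ring_scope.

Section Add.
Variables (K : fieldType) (m n : nat).
Local Notation vtx := (vtx m n).
Local Notation prep := (prep K m n).

Lemma rank_sum_le (I : finType) p q (f : I -> 'M[K]_(p, q)) :
  (\rank (\sum_i f i)%R <= \sum_i \rank (f i))%N.
Proof.
apply: (big_ind2 (fun (A : 'M_(p, q)) k => \rank A <= k)%N).
- by rewrite mxrank0.
- move=> A1 k1 A2 k2 h1 h2; apply: leq_trans (mxrank_add _ _) _.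
  exact: leq_add.
- by [].
Qed.

Lemma rk_dsum_le (S Q : {set vtx}) (x0 : vtx) (M : prep) (Ix : finType) (N : Ix -> prep) :
  x0 \in S -> dsum S M N ->
  (rk S Q x0 M <= \sum_t rk S Q x0 (N t))%N.
Proof.
move=> x0S [inj [prj [hsum [hip [hneq [hnat1 hnat2]]]]]].
have [V [F [hV [hF h1]]]] := rk_sys S Q x0 M.
set k := rk S Q x0 M in V F hV hF h1 *.
have hA t : @homV _ _ _ S Q (N t) k (fun x => V x *m prj t x).
  move=> x y xS yS xy xQ; rewrite -mulmxA -hnat2 // mulmxA hV //.
  by case: ifP; rewrite ?mul0mx.
have hB t : @homF _ _ _ S Q (N t) k (fun x => inj t x *m F x).
  move=> x y xS yS xy yQ; rewrite mulmxA -hnat1 // -mulmxA hF //.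
  by case: ifP; rewrite ?mulmx0.
have E : (1%:M : 'M_k) = \sum_t (V x0 *m prj t x0) *m (inj t x0 *m F x0).
  rewrite -h1 -{1}(mulmx1 (V x0)) -(hsum x0 x0S) mulmx_sumr mulmx_suml.
  by apply: eq_bigr => t _; rewrite !mulmxA.
have := rank_sum_le (fun t => (V x0 *m prj t x0) *m (inj t x0 *m F x0)).
rewrite -E mxrank1 => h; apply: leq_trans h _.
by apply: leq_sum => t _; exact: rank_le_rk (hA t) (hB t).
Qed.

Lemma rk_dsum_ge (S Q : {set vtx}) (x0 : vtx) (M : prep) (Ix : finType) (N : Ix -> prep) :
  x0 \in S -> dsum S M N ->
  (\sum_t rk S Q x0 (N t) <= rk S Q x0 M)%N.
Proof.
move=> x0S [inj [prj [hsum [hip [hneq [hnat1 hnat2]]]]]].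
suff H : forall s : seq Ix, uniq s -> exists p V F,
  p = (\sum_(t <- s) rk S Q x0 (N t))%N /\ @homV _ _ _ S Q M p V /\
  @homF _ _ _ S Q M p F /\ V x0 *m F x0 = 1%:M /\
  (forall u, u \notin s -> V x0 *m prj u x0 = 0 /\ inj u x0 *m F x0 = 0).
  have [p [V [F [hp [hV [hF [h1 _]]]]]]] := H (enum Ix) (enum_uniq _).
  have -> : (\sum_t rk S Q x0 (N t) = p)%N by rewrite hp big_enum.
  by apply: rk_ge; exists V, F.
elim => [_ | t s IH].
  exists 0%N, (fun x => 0 : 'M_(0, pdim M x)), (fun x => 0 : 'M_(pdim M x, 0)).
  split; first by rewrite big_nil.
  split; first by move=> x y *; rewrite mul0mx; case: ifP.
  split; first by move=> x y *; rewrite mulmx0; case: ifP.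
  split; first by rewrite [LHS]flatmx0 [RHS]flatmx0.
  by move=> u _; rewrite mul0mx mulmx0.
rewrite cons_uniq => /andP [ts us].
have [p [V [F [hp [hV [hF [h1 hort]]]]]]] := IH us.
have [Vt [Ft [hVt [hFt h1t]]]] := rk_sys S Q x0 (N t).
set kt := rk S Q x0 (N t) in Vt Ft hVt hFt h1t *.
exists (p + kt)%N, (fun x => col_mx (V x) (Vt x *m inj t x)),
  (fun x => row_mx (F x) (prj t x *m Ft x)).
split; first by rewrite big_cons hp addnC.
split.
  move=> x y xS yS xy xQ; rewrite mul_col_mx hV // -mulmxA hnat1 // mulmxA hVt //.
  by case: ifP => _; rewrite ?mul0mx ?col_mx0.
split.
  move=> x y xS yS xy yQ; rewrite mul_mx_row hF // mulmxA hnat2 // -mulmxA hFt //.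
  by case: ifP => _; rewrite ?mulmx0 ?row_mx0.
have [o1 o2] := hort t ts.
split.
  rewrite mul_col_row h1 mulmxA o1 mul0mx -mulmxA o2 mulmx0.
  rewrite mulmxA -(mulmxA (Vt x0)) hip // mulmx1 h1t.
  by rewrite -scalar_mx_block.
move=> u; rewrite inE negb_or => /andP [ut us'].
have [o1' o2'] := hort u us'.
split.
  rewrite mul_col_mx o1' -mulmxA hneq //; first by rewrite mulmx0 col_mx0.
  by rewrite eq_sym.
by rewrite mul_mx_row o2' mulmxA hneq // mul0mx row_mx0.
Qed.

Lemma rk_dsum (S Q : {set vtx}) (x0 : vtx) (M : prep) (Ix : finType) (N : Ix -> prep) :
  x0 \in S -> dsum S M N ->
  rk S Q x0 M = (\sum_t rk S Q x0 (N t))%N.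
Proof.
by move=> x0S h; apply/eqP; rewrite eqn_leq rk_dsum_le // rk_dsum_ge.
Qed.

End Add.

End PB.
Import PB.

Module PC.
Set Implicit Arguments. Unset Strict Implicit. Unset Printing Implicit Defensive.
Import GRing.Theory.
Local Open Scope ring_scope.

Lemma connect_eq (T : finType) (e : rel T) (X : Type) (f : T -> X) :
  (forall x y, e x y -> f x = f y) -> forall x y, connect e x y -> f x = f y.
Proof.
move=> h x y /connectP [p pth ->]; elim: p x pth => [|z p IH] x //= /andP [exz pth].
by rewrite (h _ _ exz); exact: IH.
Qed.

Lemma connect_exit (T : finType) (e : rel T) (P : pred T) x y :
  connect e x y -> P x -> ~~ P y -> exists u w, [/\ e u w, P u & ~~ P w].
Proof.
move=> /connectP [p pth ->]; elim: p x pth => [|z p IH] x /=.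
  by move=> _ ->.
move=> /andP [exz pth] Px Py; case Pz: (P z).
  exact: IH pth Pz Py.
by exists x, z; rewrite Pz.
Qed.

Lemma sum_unit (V : nmodType) (F : unit -> V) : \sum_(t : unit) F t = F tt.
Proof. by rewrite (big_pred1 tt) // => [[]]. Qed.

Section Thin.
Variables (K : fieldType) (m n : nat).
Local Notation vtx := (vtx m n).
Local Notation prep := (prep K m n).

Lemma gle_refl (x : vtx) : gle x x.
Proof. by rewrite /gle !leqnn. Qed.

Lemma gle_trans (x y z : vtx) : gle x y -> gle y z -> gle x z.
Proof. rewrite /gle => /andP [a b] /andP [c d]; apply/andP; split; lia. Qed.

Lemma iso_dsum (S : {set vtx}) (A B : prep) : iso S A B -> dsum S A (fun _ : unit => B).
Proof.
move=> [phi [psi [hinv hnat]]].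
exists (fun _ x => psi x), (fun _ x => phi x).
split; first by move=> x xS; rewrite sum_unit; case: (hinv x xS).
split; first by move=> x t xS; case: (hinv x xS).
split; first by move=> x [] [].
split.
  move=> x y t xS yS xy.
  have [h1 h2] := hinv y yS; have [h3 h4] := hinv x xS.
  rewrite -[LHS]mulmx1 -h1 !mulmxA -(mulmxA (psi x)) hnat //.
  by rewrite !mulmxA h4 mul1mx.
by move=> x y t xS yS xy; rewrite hnat.
Qed.

Lemma rk_iso (S Q : {set vtx}) (x0 : vtx) (A B : prep) :
  x0 \in S -> iso S A B -> rk S Q x0 A = rk S Q x0 B.
Proof.
by move=> x0S h; rewrite (rk_dsum Q x0S (iso_dsum h)) sum_unit.
Qed.

Lemma dsum_sub (S S' : {set vtx}) (M : prep) (Ix : finType) (N : Ix -> prep) :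
  S' \subset S -> dsum S M N -> dsum S' M N.
Proof.
move=> /subsetP sub [inj [prj [h1 [h2 [h3 [h4 h5]]]]]].
exists inj, prj; split; first by move=> x /sub; exact: h1.
split; first by move=> x t /sub; exact: h2.
split; first by move=> x t s /sub; exact: h3.
split; first by move=> x y t /sub xS /sub yS; exact: h4.
by move=> x y t /sub xS /sub yS; exact: h5.
Qed.

Lemma iso_sub (S S' : {set vtx}) (A B : prep) : S' \subset S -> iso S A B -> iso S' A B.
Proof.
move=> /subsetP sub [phi [psi [h1 h2]]]; exists phi, psi; split.
  by move=> x /sub; exact: h1.
by move=> x y /sub xS /sub yS; exact: h2.
Qed.

Lemma rk_dim (M : prep) x : pmap M x x = 1%:M ->
  rk [set x] [set x] x M = pdim M x.
Proof.
move=> hxx; apply/eqP; rewrite eqn_leq; apply/andP; split.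
  exact: dualsys_le (rk_sys _ _ _ _).
apply: rk_ge; exists (fun y => pid_mx (pdim M x) : 'M_(pdim M x, pdim M y)),
  (fun y => pid_mx (pdim M x) : 'M_(pdim M y, pdim M x)).
split.
  by move=> y z /set1P -> /set1P -> _ _; rewrite inE eqxx hxx pid_mx_1 mulmx1.
split.
  by move=> y z /set1P -> /set1P -> _ _; rewrite inE eqxx hxx pid_mx_1 mul1mx.
by rewrite pid_mx_1 mulmx1.
Qed.

Lemma dim_dsum (S : {set vtx}) (M : prep) (Ix : finType) (N : Ix -> prep) x :
  x \in S -> dsum S M N -> pmap M x x = 1%:M ->
  (forall t, pmap (N t) x x = 1%:M) ->
  pdim M x = (\sum_t pdim (N t) x)%N.
Proof.
move=> xS h hM hN.
have h' : dsum [set x] M N by apply: dsum_sub h; rewrite sub1set.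
rewrite -rk_dim // (rk_dsum [set x] (set11 x) h').
by apply: eq_bigr => t _; rewrite rk_dim.
Qed.

End Thin.

End PC.
Import PC.

Module PD.
Set Implicit Arguments. Unset Strict Implicit. Unset Printing Implicit Defensive.
Import GRing.Theory.
Local Open Scope ring_scope.

Section Thin2.
Variables (K : fieldType) (m n : nat).
Local Notation vtx := (vtx m n).
Local Notation prep := (prep K m n).

Definition cmpR (S Q : {set vtx}) : rel vtx := fun x y =>
  [&& x \in S, x \in Q, y \in S, y \in Q & gle x y || gle y x].
Definition cmpc (S Q : {set vtx}) x0 :=
  forall x, x \in S -> x \in Q -> connect (cmpR S Q) x0 x.
Definition convexon (S Q : {set vtx}) := forall x y z : vtx,
  x \in S -> y \in S -> z \in S -> x \in Q -> z \in Q ->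
  gle x y -> gle y z -> y \in Q.

Lemma const_mul p q r (a c : K) :
  (const_mx a : 'M_(p, q)) *m (const_mx c : 'M_(q, r)) = const_mx (a * c *+ q).
Proof.
apply/matrixP => i j; rewrite !mxE.
under eq_bigr do rewrite !mxE.
by rewrite sumr_const card_ord.
Qed.

Lemma constb (b : bool) (c : K) :
  (b -> c = 1) -> (const_mx c : 'M_(nat_of_bool b)) = 1%:M.
Proof.
case: b => h; last by rewrite [LHS]flatmx0 [RHS]flatmx0.
apply/matrixP => i j; rewrite !mxE h //.
by rewrite (ord1 i) (ord1 j).
Qed.

Lemma constb2 (b1 b2 : bool) (c c' : K) :
  (b1 -> b2 -> c = c') ->
  (const_mx c : 'M_(nat_of_bool b1, nat_of_bool b2)) = const_mx c'.
Proof.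
move=> h; apply/matrixP => i j; rewrite !mxE.
move: i j h; case: b1 => [|] [i hi] [j hj] //= h.
move: hj h; case: b2 => //= _ h; exact: h.
Qed.

Lemma inner0 p q (b : bool) (A : 'M[K]_(p, nat_of_bool b)) B :
  b = false -> A *m (B : 'M_(nat_of_bool b, q)) = 0.
Proof. by move: A B; case: b => // A B _; rewrite [A]thinmx0 mul0mx. Qed.

Lemma Vrep_rep (S Q : {set vtx}) : convexon S Q -> is_rep S (Vrep K Q).
Proof.
move=> hc; split.
  by move=> x xS /=; apply: constb => ->; rewrite gle_refl.
move=> x y z xS yS zS xy yz /=; rewrite const_mul.
apply: constb2 => xQ zQ; rewrite xQ zQ (gle_trans xy yz) xy yz /=.
by rewrite (hc x y z) //= mulr1.
Qed.

Lemma const_one (S Q : {set vtx}) x0 (M : prep) V F :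
  @homV _ _ _ S Q M 1 V -> @homF _ _ _ S Q M 1 F ->
  x0 \in S -> x0 \in Q -> cmpc S Q x0 -> V x0 *m F x0 = 1%:M ->
  forall x, x \in S -> x \in Q -> V x *m F x = 1%:M.
Proof.
move=> hV hF x0S x0Q hc h1 x xS xQ.
rewrite -h1; symmetry; apply: (@connect_eq _ (cmpR S Q) _ (fun x => V x *m F x)) (hc x xS xQ).
move=> u w /and5P [uS uQ wS wQ /orP [uw|wu]].
  have e1 := hV u w uS wS uw uQ; rewrite wQ in e1.
  have e2 := hF u w uS wS uw wQ; rewrite uQ in e2.
  by rewrite -e1 -mulmxA e2.
have e1 := hV w u wS uS wu wQ; rewrite uQ in e1.
have e2 := hF w u wS uS wu uQ; rewrite wQ in e2.
by rewrite -e1 -mulmxA e2.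
Qed.

End Thin2.

End PD.
Import PD.

Module PE.
Set Implicit Arguments. Unset Strict Implicit. Unset Printing Implicit Defensive.
Import GRing.Theory.
Local Open Scope ring_scope.

Section Thin3.
Variables (K : fieldType) (m n : nat).
Local Notation vtx := (vtx m n).
Local Notation prep := (prep K m n).

Lemma rk0 (S Q : {set vtx}) x0 (M : prep) :
  ~ dualsys S Q x0 M 1 -> rk S Q x0 M = 0%N.
Proof.
move=> h; case E: (rk S Q x0 M) => [//|k]; exfalso; apply: h.
by apply: (dualsys_mono (rk_sys S Q x0 M)); rewrite E.
Qed.

Lemma rk_thin_one (S Q Q' : {set vtx}) x0 :
  x0 \in S -> x0 \in Q -> (forall x, x \in S -> (x \in Q') = (x \in Q)) ->
  rk S Q x0 (Vrep K Q') = 1%N.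
Proof.
move=> x0S x0Q hQ; apply/eqP; rewrite eqn_leq; apply/andP; split.
  apply: leq_trans (dualsys_le (rk_sys _ _ _ _)) _.
  by rewrite /= hQ // x0Q.
apply: rk_ge.
exists (fun y => const_mx 1 : 'M[K]_(1, nat_of_bool (y \in Q'))),
  (fun y => const_mx 1 : 'M[K]_(nat_of_bool (y \in Q'), 1)).
split.
  move=> x y xS yS xy xQ /=; rewrite const_mul.
  apply/matrixP => i j; rewrite (fun_if (fun A : 'M_(_, _) => A i j)) !mxE.
  clear i j.
  by rewrite (hQ x xS) (hQ y yS) xQ xy /=; case: (y \in Q); rewrite ?mul1r.
split.
  move=> x y xS yS xy yQ /=; rewrite const_mul.
  apply/matrixP => i j; rewrite (fun_if (fun A : 'M_(_, _) => A i j)) !mxE.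
  clear i j.
  rewrite (hQ x xS) (hQ y yS) yQ xy; case: (x \in Q); rewrite /= ?mulr1 //.
rewrite /= (@const_mul K 1 (nat_of_bool (x0 \in Q')) 1 1 1); apply: (@constb K true) => _.
by rewrite (hQ x0 x0S) x0Q mul1r.
Qed.

Lemma one_neq0 : (1%:M : 'M[K]_1) <> 0.
Proof. by move/matrixP/(_ ord0 ord0); rewrite !mxE /= => /eqP; rewrite oner_eq0. Qed.

Lemma no_dual_out (S Q Q' : {set vtx}) x0 x :
  x0 \in S -> x0 \in Q -> cmpc S Q x0 ->
  x \in S -> x \in Q -> x \notin Q' -> ~ dualsys S Q x0 (Vrep K Q') 1.
Proof.
move=> x0S x0Q hc xS xQ xQ' [V [F [hV [hF h1]]]].
have := const_one hV hF x0S x0Q hc h1 xS xQ.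
rewrite inner0; last by apply/negbTE.
by move/esym; exact: one_neq0.
Qed.

Lemma no_dual_exit (S Q Q' : {set vtx}) x0 u w :
  x0 \in S -> x0 \in Q -> cmpc S Q x0 ->
  u \in S -> u \in Q -> u \in Q' -> w \in S -> w \in Q' -> w \notin Q ->
  gle u w || gle w u -> ~ dualsys S Q x0 (Vrep K Q') 1.
Proof.
move=> x0S x0Q hc uS uQ uQ' wS wQ' wQ /orP huw [V [F [hV [hF h1]]]].
have h := const_one hV hF x0S x0Q hc h1 uS uQ.
apply: one_neq0; rewrite -h.
case: huw => [uw|wu].
  have e1 := hV u w uS wS uw uQ; rewrite (negbTE wQ) in e1.
  have eG : pmap (Vrep K Q') u w *m
      (const_mx 1 : 'M[K]_(nat_of_bool (w \in Q'), nat_of_bool (u \in Q'))) = 1%:M.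
    by rewrite /= const_mul; apply: constb => _; rewrite uQ' wQ' uw /= mulr1.
  by rewrite -[F u]mul1mx -eG !mulmxA e1 !mul0mx.
have e1 := hF w u wS uS wu uQ; rewrite (negbTE wQ) in e1.
have eG : (const_mx 1 : 'M[K]_(nat_of_bool (u \in Q'), nat_of_bool (w \in Q')))
    *m pmap (Vrep K Q') w u = 1%:M.
  by rewrite /= const_mul; apply: constb => _; rewrite uQ' wQ' wu /= mul1r.
by rewrite -[F u]mul1mx -eG -mulmxA e1 !mulmx0.
Qed.

End Thin3.

End PE.
Import PE.

Module PF.
Set Implicit Arguments. Unset Strict Implicit. Unset Printing Implicit Defensive.
Import GRing.Theory.
Local Open Scope ring_scope.

Section Split.
Variables (K : fieldType) (m n : nat).
Local Notation vtx := (vtx m n).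
Local Notation prep := (prep K m n).

Lemma phipsi (b : bool) d (v : 'M[K]_(1, d)) (f : 'M_(d, 1)) :
  (b -> v *m f = 1%:M) ->
  (\matrix_(i < nat_of_bool b, j < d) v 0 j) *m (\matrix_(i < d, j < nat_of_bool b) f i 0)
  = 1%:M.
Proof.
case: b => h; last by rewrite [LHS]flatmx0 [RHS]flatmx0.
apply/matrixP => i j; rewrite (ord1 i) (ord1 j).
have /matrixP/(_ ord0 ord0) := h isT; rewrite !mxE => <-.
by apply: eq_bigr => k _; rewrite !mxE.
Qed.

Lemma bool_of_ord (b : bool) (i : 'I_(nat_of_bool b)) : b.
Proof. by case: b i => // -[]. Qed.

Lemma split_iso (S Q : {set vtx}) x0 (N : prep) :
  x0 \in S -> x0 \in Q -> cmpc S Q x0 -> convexon S Q ->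
  indecomposable S N -> dualsys S Q x0 N 1 -> iso S N (Vrep K Q).
Proof.
move=> x0S x0Q hc hcv [hrep [hnz hind]] [V [F [hV [hF h1]]]].
have hVF := const_one hV hF x0S x0Q hc h1.
pose X := Vrep K Q.
pose phi x : 'M[K]_(pdim X x, pdim N x) := \matrix_(i, j) V x 0 j.
pose psi x : 'M[K]_(pdim N x, pdim X x) := \matrix_(i, j) F x i 0.
have P1 x : x \in S -> phi x *m psi x = 1%:M.
  by move=> xS; exact: (phipsi (hVF x xS)).
have P2 x y : x \in S -> y \in S -> gle x y ->
    pmap X x y *m phi y = phi x *m pmap N x y.
  move=> xS yS xy; apply/matrixP => i j.
  have xQ : x \in Q := bool_of_ord i.
  have := hV x y xS yS xy xQ; move/matrixP/(_ 0 j).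
  rewrite !mxE => E.
  have -> : \sum_k phi x i k * pmap N x y k j = \sum_k V x 0 k * pmap N x y k j.
    by apply: eq_bigr => k _; rewrite !mxE.
  rewrite E; under eq_bigr do rewrite !mxE.
  rewrite sumr_const card_ord; clear i.
  by case yQ: (y \in Q); rewrite ?mxE //= ?yQ xQ ?xy /= ?mul1r ?mulr0n ?mulr1n.
have P3 x y : x \in S -> y \in S -> gle x y ->
    pmap N x y *m psi y = psi x *m pmap X x y.
  move=> xS yS xy; apply/matrixP => i j.
  have yQ : y \in Q := bool_of_ord j.
  have := hF x y xS yS xy yQ; move/matrixP/(_ i 0).
  rewrite !mxE => E.
  have -> : \sum_k pmap N x y i k * psi y k j = \sum_k pmap N x y i k * F y k 0.
    by apply: eq_bigr => k _; rewrite !mxE.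
  rewrite E; under [RHS]eq_bigr do rewrite !mxE.
  rewrite sumr_const card_ord; clear j.
  by case xQ: (x \in Q); rewrite ?mxE //= ?xQ ?yQ ?xy /= ?mulr1 ?mulr0 ?mul0rn ?mulr1n.
pose e x := 1%:M - psi x *m phi x.
have AA x : x \in S -> psi x *m phi x *m (psi x *m phi x) = psi x *m phi x.
  by move=> xS; rewrite mulmxA -(mulmxA (psi x)) P1 // mulmx1.
have eid x : x \in S -> e x *m e x = e x.
  by move=> xS; rewrite /e mulmxBl mul1mx mulmxBr mulmx1 AA // subrr subr0.
have enat x y : x \in S -> y \in S -> gle x y ->
    pmap N x y *m e y = e x *m pmap N x y.
  move=> xS yS xy; rewrite /e mulmxBr mulmxBl mulmx1 mul1mx mulmxA P3 //.
  by rewrite -mulmxA P2 // mulmxA.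
pose B x := row_base (e x).
pose P x := e x *m pinvmx (B x).
have Be x : x \in S -> B x *m e x = B x.
  move=> xS; have : (B x <= e x)%MS by rewrite /B eq_row_base submx_refl.
  by case/submxP => D ->; rewrite -mulmxA eid.
have BP x : x \in S -> B x *m P x = 1%:M.
  move=> xS; rewrite /P mulmxA Be //.
  apply: (row_free_inj (row_base_free (e x))) => /=.
  by rewrite mulmxKpV ?submx_refl // mul1mx.
have PB x : P x *m B x = e x.
  by rewrite /P mulmxKpV // /B eq_row_base submx_refl.
have phiP x : x \in S -> phi x *m P x = 0.
  move=> xS; rewrite /P mulmxA {1}/e mulmxBr mulmx1 (mulmxA (phi x) (psi x)) P1 //.
  by rewrite mul1mx subrr mul0mx.
have Bpsi x : x \in S -> B x *m psi x = 0.
  move=> xS; rewrite -Be // -mulmxA {2}/e mulmxBl mul1mx -(mulmxA (psi x) (phi x)) P1 //.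
  by rewrite mulmx1 subrr mulmx0.
pose C := @PRep K m n (fun x => \rank (e x)) (fun x y => B x *m pmap N x y *m P y).
have Crep : is_rep S C.
  split.
    by move=> x xS /=; rewrite (proj1 hrep x xS) mulmx1 BP.
  move=> x y z xS yS zS xy yz /=.
  have E1 : P y *m (B y *m pmap N y z) = e y *m pmap N y z by rewrite mulmxA PB.
  rewrite (mulmxA (B x *m pmap N x y *m P y) (B y *m pmap N y z) (P z)).
  rewrite -(mulmxA (B x *m pmap N x y) (P y) (B y *m pmap N y z)) E1.
  rewrite (mulmxA (B x *m pmap N x y) (e y) (pmap N y z)).
  rewrite -(mulmxA (B x) (pmap N x y) (e y)) enat //.
  rewrite (mulmxA (B x) (e x) (pmap N x y)) Be //.
  by rewrite -(mulmxA (B x) (pmap N x y) (pmap N y z)) (proj2 hrep x y z).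
have Xrep : is_rep S X := Vrep_rep K hcv.
pose inj := fun t : bool => match t return
   forall x, 'M[K]_(pdim (if t then X else C) x, pdim N x) with
   | true => phi | false => B end.
pose prj := fun t : bool => match t return
   forall x, 'M[K]_(pdim N x, pdim (if t then X else C) x) with
   | true => psi | false => P end.
have hds : dsum S N (fun t : bool => if t then X else C).
  exists inj, prj.
  split; first by move=> x xS; rewrite big_bool /= PB /e addrC subrK.
  split; first by move=> x [] xS /=; [exact: P1 | exact: BP].
  split; first by move=> x [] [] // xS _ /=; [exact: phiP | exact: Bpsi].
  split.
    move=> x y [] xS yS xy /=; first by rewrite P2.
    rewrite -(mulmxA (B x *m pmap N x y) (P y) (B y)) PB.
    by rewrite -(mulmxA (B x) (pmap N x y) (e y)) enat // (mulmxA (B x) (e x)) Be.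
  move=> x y [] xS yS xy /=; first by rewrite P3.
  rewrite (mulmxA (P x) (B x *m pmap N x y) (P y)) (mulmxA (P x) (B x) (pmap N x y)) PB.
  rewrite -enat // -(mulmxA (pmap N x y) (e y) (P y)).
  by rewrite /P (mulmxA (e y) (e y)) eid.
have [hX0 | hC0] := hind X C Xrep Crep hds.
  by move: (hX0 x0 x0S) => /=; rewrite x0Q.
have e0 x : x \in S -> psi x *m phi x = 1%:M.
  move=> xS; have /eqP := hC0 x xS; rewrite /= mxrank_eq0 /e subr_eq0.
  by move/eqP ->.
exists psi, phi; split; first by move=> x xS; rewrite e0 // P1.
by move=> x y xS yS xy; rewrite P3.
Qed.

End Split.

End PF.
Import PF.

Module PG.
Set Implicit Arguments. Unset Strict Implicit. Unset Printing Implicit Defensive.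
Import GRing.Theory.

Lemma connect_prop (T : finType) (e : rel T) (P : T -> Prop) :
  (forall x y, e x y -> P x -> P y) -> forall x y, connect e x y -> P x -> P y.
Proof.
move=> h x y /connectP [p pth ->]; elim: p x pth => [|z p IH] x //= /andP [exz pth] Px.
exact: IH pth (h _ _ exz Px).
Qed.

Section Comb.
Variables (m n : nat).
Local Notation vtx := (vtx m n).

Lemma garrow_gle (x y : vtx) : garrow x y -> gle x y.
Proof.
rewrite /garrow /gle => /orP [/andP [/eqP e1 /eqP e2] | /andP [/eqP e1 /eqP e2]];
  apply/andP; split; lia.
Qed.

Lemma garrow_sum (x y : vtx) : garrow x y -> (x.1 + x.2).+1 = (y.1 + y.2)%N.
Proof.
rewrite /garrow => /orP [/andP [/eqP e1 /eqP e2] | /andP [/eqP e1 /eqP e2]]; lia.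
Qed.

Lemma src_below (I : {set vtx}) x : x \in I ->
  exists s, [&& is_source I s & gle s x].
Proof.
move=> xI; pose P := [pred y : vtx | (y \in I) && gle y x].
have Px : P x by rewrite /= xI gle_refl.
case: (arg_minnP (fun y : vtx => (y.1 + y.2)%N) Px) => s /andP [sI sx] hmin.
exists s; rewrite sx andbT /is_source sI /=.
apply/forall_inP => y yI; apply/negP => ar.
have Py : P y by rewrite /= yI (gle_trans (garrow_gle ar) sx).
have := hmin y Py; have := garrow_sum ar; lia.
Qed.

Lemma snk_above (I : {set vtx}) x : x \in I ->
  exists k, [&& is_sink I k & gle x k].
Proof.
move=> xI; pose P := [pred y : vtx | (y \in I) && gle x y].
have Px : P x by rewrite /= xI gle_refl.
case: (arg_maxnP (fun y : vtx => (y.1 + y.2)%N) Px) => s /andP [sI sx] hmax.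
exists s; rewrite sx andbT /is_sink sI /=.
apply/forall_inP => y yI; apply/negP => ar.
have Py : P y by rewrite /= yI (gle_trans sx (garrow_gle ar)).
have := hmax y Py; have := garrow_sum ar; lia.
Qed.

Lemma ss_sub (I : {set vtx}) : ss_set I \subset I.
Proof.
by apply/subsetP => x; rewrite inE /is_source /is_sink => /orP [/andP [] | /andP []].
Qed.

Lemma ss_ess (I : {set vtx}) e : ss_set I \subset ess_set e I /\ ess_set e I \subset I.
Proof.
case: e => /=; first by rewrite subxx ss_sub.
- split; last by apply/subsetP => x; rewrite inE => /andP [].
  apply/subsetP => x xs; rewrite inE (subsetP (ss_sub I) x xs) /=.
  by rewrite !imset_f.
- by rewrite ss_sub subxx.
Qed.

Lemma interval_convex (I : {set vtx}) x y z :
  is_interval I -> x \in I -> y \in I -> gle x z -> gle z y -> z \in I.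
Proof.
case/and3P => _ _ /forall_inP h xI yI xz zy.
by have /forall_inP/(_ y yI)/forallP/(_ z) := h x xI; rewrite xz zy; apply.
Qed.

Lemma interval_conn (I : {set vtx}) x y :
  is_interval I -> x \in I -> y \in I -> connect (adjI I) x y.
Proof.
case/and3P => _ /forall_inP h _ xI yI.
by have /forall_inP := h x xI; apply.
Qed.

Lemma ss_sub_interval (I J : {set vtx}) :
  is_interval I -> is_interval J -> ss_set I \subset J -> I \subset J.
Proof.
move=> hI hJ /subsetP sJ; apply/subsetP => x xI.
have [s /andP [hs sx]] := src_below xI.
have [k /andP [hk xk]] := snk_above xI.
apply: (interval_convex hJ (x := s) (y := k)) => //; apply: sJ; rewrite inE ?hs ?hk ?orbT //.
Qed.

End Comb.

End PG.
Import PG.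

Module PH.
Set Implicit Arguments. Unset Strict Implicit. Unset Printing Implicit Defensive.

Section Comb2.
Variables (m n : nat).
Local Notation vtx := (vtx m n).

Lemma cmpR_sym (S Q : {set vtx}) : symmetric (cmpR S Q).
Proof. by move=> x y; rewrite /cmpR; do 4 case: (_ \in _) => //=; rewrite orbC. Qed.

Lemma int_cmpc (J : {set vtx}) x0 : is_interval J -> x0 \in J -> cmpc setT J x0.
Proof.
move=> hJ x0J x _ xJ; apply: connect_sub (interval_conn hJ x0J xJ).
move=> u v /and3P [uJ vJ /orP h]; apply: connect1.
by rewrite /cmpR !inE uJ vJ /=; case: h => /garrow_gle ->; rewrite ?orbT.
Qed.

Lemma convexon_int (S J : {set vtx}) : is_interval J -> convexon S J.
Proof. by move=> hJ x y z _ _ _ xJ zJ xy yz; exact: interval_convex hJ xJ zJ xy yz. Qed.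

Lemma ess_cmpc (I S : {set vtx}) x0 :
  is_interval I -> ss_set I \subset S -> S \subset I -> x0 \in S -> cmpc S I x0.
Proof.
move=> hI /subsetP ssS /subsetP SI x0S.
set R := cmpR S I.
have srcS s : is_source I s -> s \in S by move=> h; apply: ssS; rewrite inE h.
have snkS s : is_sink I s -> s \in S by move=> h; apply: ssS; rewrite inE h orbT.
have srcI s : is_source I s -> s \in I by case/andP.
have snkI s : is_sink I s -> s \in I by case/andP.
have x0I := SI _ x0S.
have [s0 /andP [hs0 s0x0]] := src_below x0I.
pose Pp x := exists s, [/\ is_source I s, gle s x & connect R s0 s].
have claim x : x \in I -> Pp x ->
    (forall s, is_source I s -> gle s x -> connect R s0 s) /\
    (forall k, is_sink I k -> gle x k -> connect R s0 k).
  move=> xI [s1 [hs1 s1x c1]].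
  have snk k : is_sink I k -> gle x k -> connect R s0 k.
    move=> hk xk; apply: connect_trans c1 (connect1 _).
    by rewrite /R /cmpR (srcS s1 hs1) (srcI s1 hs1) (snkS k hk) (snkI k hk) (gle_trans s1x xk).
  split => // s hs sx.
  have [k /andP [hk xk]] := snk_above xI.
  apply: connect_trans (snk k hk xk) (connect1 _).
  by rewrite /R /cmpR (srcS s hs) (srcI s hs) (snkS k hk) (snkI k hk) (gle_trans sx xk) orbT.
have allP x : x \in I -> Pp x.
  move=> xI; have s0I := srcI _ hs0.
  apply: (connect_prop (e := adjI I) (P := Pp) _ (interval_conn hI s0I xI)).
    move=> u v /and3P [uI vI /orP [uv | vu]] [s [hs su c]].
      by exists s; split => //; exact: gle_trans su (garrow_gle uv).
    have [s' /andP [hs' s'v]] := src_below vI.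
    exists s'; split => //; apply: (proj1 (claim u uI _)).
      by exists s.
      by [].
    exact: gle_trans s'v (garrow_gle vu).
  by exists s0; split => //; exact: gle_refl.
have conn x : x \in S -> connect R s0 x.
  move=> xS; have xI := SI _ xS.
  have [s [hs sx c]] := allP x xI.
  apply: connect_trans c (connect1 _).
  by rewrite /R /cmpR (srcS s hs) (srcI s hs) xS xI sx.
move=> x xS _; apply: connect_trans (conn x xS).
by rewrite (sym_connect_sym (@cmpR_sym S I)) conn.
Qed.

End Comb2.

End PH.
Import PH.

Module PMain.
Set Implicit Arguments. Unset Strict Implicit. Unset Printing Implicit Defensive.
Import GRing.Theory.

Lemma sum_eq1 (T : finType) (P : pred T) (a : T) :
  (\sum_(b | P b) nat_of_bool (a == b))%N = nat_of_bool (P a).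
Proof.
rewrite big_mkcond (bigD1 a) //= eqxx big1 ?addn0; first by case: (P a).
by move=> b /negbTE nab; rewrite eq_sym nab; case: (P b).
Qed.

Section Main.
Variables (K : fieldType) (m n : nat).
Local Notation vtx := (vtx m n).
Local Notation prep := (prep K m n).

Lemma iso_dim (S : {set vtx}) (A B : prep) x :
  x \in S -> iso S A B -> pdim A x = pdim B x.
Proof.
move=> xS [phi [psi [h _]]]; have [h1 h2] := h x xS.
by apply/eqP; rewrite eqn_leq (mulmx1_min h1) (mulmx1_min h2).
Qed.

Lemma rk_int (J J' : {set vtx}) x :
  is_interval J -> is_interval J' -> x \in J ->
  rk setT J x (Vrep K J') = nat_of_bool (J' == J).
Proof.
move=> hJ hJ' xJ; case: (J' =P J) => [-> | neq] /=.
  by apply: rk_thin_one; rewrite ?inE.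
apply: rk0; have hc := int_cmpc hJ xJ.
case: (boolP (J \subset J')) => sub; last first.
  case/subsetPn: sub => y yJ yJ'.
  exact: (no_dual_out (in_setT x) xJ hc (in_setT y) yJ yJ').
have : ~~ (J' \subset J).
  by apply/negP => sub'; apply: neq; apply/eqP; rewrite eqEsubset sub sub'.
case/subsetPn => w wJ' wJ.
have xJ' := subsetP sub x xJ.
have := int_cmpc hJ' xJ' (in_setT w) wJ'.
case/(connect_exit (P := mem J)) => // u [w' [/and5P [_ uJ' _ w'J' hc'] uJ w'J]].
exact: (no_dual_exit (in_setT x) xJ hc (in_setT u) uJ uJ' (in_setT w') w'J' w'J hc').
Qed.

Lemma rk_ess (I J S : {set vtx}) x0 :
  is_interval I -> is_interval J -> ss_set I \subset S -> S \subset I -> x0 \in S ->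
  rk S I x0 (Vrep K J) = nat_of_bool (I \subset J).
Proof.
move=> hI hJ ssS SI x0S.
have x0I := subsetP SI x0 x0S.
case: (boolP (I \subset J)) => h /=.
  apply: rk_thin_one => // y yS; have yI := subsetP SI y yS.
  by rewrite yI (subsetP h y yI).
apply: rk0.
have : ~~ (ss_set I \subset J).
  by apply/negP => h'; move: h; rewrite (ss_sub_interval hI hJ h').
case/subsetPn => y yss yJ.
exact: (no_dual_out x0S x0I (ess_cmpc hI ssS SI x0S) (subsetP ssS y yss)
  (subsetP (ss_sub I) y yss) yJ).
Qed.

Lemma f_vrep (J : {set vtx}) x : is_interval J -> x \in J ->
  (\sum_(J' | is_interval J' && (x \in J')) rk setT J' x (Vrep K J))%N = 1%N.
Proof.
move=> hJ xJ.
rewrite (eq_bigr (fun J' => nat_of_bool (J == J'))); last first.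
  by move=> J' /andP [hJ' xJ']; rewrite rk_int.
by rewrite sum_eq1 hJ xJ.
Qed.

Lemma KS_intervals (M : prep) (Ix : finType) (N : Ix -> prep) :
  is_rep setT M -> interval_decomposable M -> KS_decomp setT M N ->
  forall t, exists J, is_interval J /\ iso setT (N t) (Vrep K J).
Proof.
move=> hM [Ix0 [J0 [hJ0 hds0]]] [hind hds] t0.
apply: NNPP => hno.
have hnz : ~ is_zero setT (N t0) by case: (hind t0) => _ [].
have [x hx] : exists x, pdim (N t0) x <> 0%N.
  by apply: NNPP => h; apply: hnz => y _; apply: NNPP => h'; apply: h; exists y.
pose f (L : prep) := (\sum_(J | is_interval J && (x \in J)) rk setT J x L)%N.
have xT : x \in [set: vtx] by rewrite inE.
have fM1 : f M = (\sum_t f (N t))%N.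
  rewrite /f; under eq_bigr do rewrite (rk_dsum _ xT hds).
  exact: exchange_big.
have fM2 : f M = (\sum_s nat_of_bool (x \in J0 s))%N.
  rewrite /f; under eq_bigr do rewrite (rk_dsum _ xT hds0).
  rewrite exchange_big /=; apply: eq_bigr => s _.
  rewrite (eq_bigr (fun J => nat_of_bool (J0 s == J))); last first.
    by move=> J /andP [hJ xJ]; rewrite rk_int.
  by rewrite sum_eq1 hJ0.
have dM1 : pdim M x = (\sum_s nat_of_bool (x \in J0 s))%N.
  rewrite (dim_dsum xT hds0 (proj1 hM x xT)) //.
  move=> s /=; exact: (proj1 (Vrep_rep K (convexon_int (S := setT) (hJ0 s))) x xT).
have dM2 : pdim M x = (\sum_t pdim (N t) x)%N.
  rewrite (dim_dsum xT hds (proj1 hM x xT)) //.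
  by move=> t; case: (hind t) => [[h _] _]; exact: h.
have split1 t J : is_interval J -> x \in J -> (0 < rk setT J x (N t))%N ->
    iso setT (N t) (Vrep K J).
  move=> hJ xJ hpos; apply: (split_iso xT xJ (int_cmpc hJ xJ) (convexon_int (S := setT) hJ) (hind t)).
  exact: dualsys_mono (rk_sys _ _ _ _) hpos.
have clA t : (f (N t) <= pdim (N t) x)%N.
  case: (classic (exists J, [/\ is_interval J, x \in J & (0 < rk setT J x (N t))%N])).
    case=> J [hJ xJ hpos]; have hiso := split1 t J hJ xJ hpos.
    have -> : f (N t) = 1%N.
      rewrite /f -(f_vrep hJ xJ); apply: eq_bigr => J' _.
      exact: rk_iso xT hiso.
    by rewrite (iso_dim xT hiso) /= xJ.
  move=> hn; rewrite /f big1 // => J /andP [hJ xJ].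
  apply/eqP; rewrite -leqn0 leqNgt; apply/negP => hpos; apply: hn; exists J; split=> //.
have clB : f (N t0) = 0%N.
  rewrite /f big1 // => J /andP [hJ xJ].
  apply/eqP; rewrite -leqn0 leqNgt; apply/negP => hpos; apply: hno; exists J; split=> //.
  exact: split1.
have : (\sum_t f (N t) < \sum_t pdim (N t) x)%N.
  have E1 : (\sum_t f (N t) = f (N t0) + \sum_(t | t != t0) f (N t))%N.
    by rewrite (bigD1 t0).
  have E2 : (\sum_t pdim (N t) x = pdim (N t0) x + \sum_(t | t != t0) pdim (N t) x)%N.
    by rewrite (bigD1 t0).
  rewrite E1 E2 clB.
  have : (\sum_(t | t != t0) f (N t) <= \sum_(t | t != t0) pdim (N t) x)%N.
    by apply: leq_sum => t _; exact: clA.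
  by move: hx; lia.
by rewrite -fM1 fM2 -dM1 dM2 ltnn.
Qed.

End Main.

End PMain.
Import PMain.

Unset Implicit Arguments. Set Strict Implicit. Set Printing Implicit Defensive.

Theorem mainTheorem10 (K : fieldType) (m n : nat) (M : prep K m n) :
  (0 < m)%N -> (0 < n)%N ->
  is_rep setT M ->
  interval_decomposable M ->
  forall (I : {set vtx m n}), is_interval I ->
  forall e : ess,
  forall (Ix : finType) (N : Ix -> prep K m n), KS_decomp setT M N ->
  forall T : {set vtx m n} -> {set Ix},
    (forall J t, t \in T J <-> iso setT (N t) (Vrep K J)) ->
  forall (Ix' : finType) (N' : Ix' -> prep K m n),
    KS_decomp (ess_set e I) (restrict (ess_set e I) M) N' ->
  forall T' : {set Ix'},
    (forall t, t \in T' <->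
       iso (ess_set e I) (N' t) (restrict (ess_set e I) (Vrep K I))) ->
  #|T'| = (\sum_(J : {set vtx m n} | is_interval J && (I \subset J)) #|T J|)%N.
Proof.
move=> _ _ hM hID I hI e Ix N hKS T hT Ix' N' hKS' T' hT'.
set S := ess_set e I.
have [ssS SI] := ss_ess I e; rewrite -/S in ssS SI.
have [x0 x0S] : exists x0, x0 \in S.
  have /set0Pn [y yI] : I != set0 by case/and3P: hI.
  have [s /andP [hs _]] := src_below yI.
  by exists s; apply: (subsetP ssS); rewrite inE hs.
have x0I := subsetP SI x0 x0S.
have hc := ess_cmpc hI ssS SI x0S.
have hint := KS_intervals hM hID hKS.
have E1 : rk S I x0 M = #|T'|.
  rewrite (rk_dsum _ x0S (proj2 hKS')) -sum1_card [RHS]big_mkcond /=.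
  apply: eq_bigr => t _; case: (boolP (t \in T')) => h.
    have hiso := proj1 (hT' t) h.
    by rewrite (rk_iso _ x0S hiso) /restrict (rk_ess K hI hI ssS SI x0S) subxx.
  apply: rk0 => ds; move/negP: h; apply; apply/(hT' t).
  apply: (split_iso x0S x0I hc (convexon_int hI) (proj1 hKS' t) ds).
have E2 : rk S I x0 M = (\sum_t rk S I x0 (N t))%N.
  apply: (rk_dsum _ x0S); apply: dsum_sub (proj2 hKS); exact: subsetT.
rewrite -E1 E2.
have -> : (\sum_(J | is_interval J && (I \subset J)) #|T J| =
   \sum_(J | is_interval J && (I \subset J)) \sum_t nat_of_bool (t \in T J))%N.
  by apply: eq_bigr => J _; rewrite -sum1_card [LHS]big_mkcond.
rewrite exchange_big /=; apply: eq_bigr => t _.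
have [Jt [hJt isot]] := hint t.
rewrite (rk_iso _ x0S (iso_sub (subsetT S) isot)) (rk_ess K hI hJt ssS SI x0S).
rewrite (eq_bigr (fun J => nat_of_bool (Jt == J))); last first.
  move=> J _; congr nat_of_bool; apply/idP/eqP.
    move/hT => isoJ; apply/setP => x.
    have xT : x \in [set: vtx m n] by rewrite inE.
    have := iso_dim xT isot; rewrite (iso_dim xT isoJ) /=.
    by do 2 case: (_ \in _).
  by move=> <-; apply/hT.
by rewrite sum_eq1 hJt.
Qed.
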